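(* Let $(G,<_X,k)$ be an instance of \textsc{One-Sided $k$-Planarity} with $G=(X\cup Y,E)$. If $G$ contains a vertex $v\in X$ with $\deg(v)>2k+2$ that has a leaf neighbor $y\in Y$, then $(G,<_X,k)$ is a YES-instance if and only if $(G-y,<_X,k)$ is a YES-instance.
   Context: A leaf is a vertex with exactly one neighbor. A 2-layer drawing of a bipartite graph $G=(X\cup Y,E)$ ($X\cap Y=\emptyset$, $E\subseteq X\times Y$) is a pair $(<_X,<_Y)$ of strict linear orders on $X$ and $Y$. Edges $\{x,y\},\{x',y'\}$ with $x\ne x'\in X$, $y\ne y'\in Y$ cross if $x<_Xx'$ and $y'<_Yy$. The drawing is $k$-planar if every edge crosses at most $k$ edges. \textsc{One-Sided $k$-Planarity}: given a bipartite graph $(X\cup Y,E)$, an integer $k\ge0$ and a linear order $<_X$ of $X$, decide whether there is a linear order $<_Y$ of $Y$ with $(<_X,<_Y)$ a 2-layer $k$-planar drawing; a YES-instance is one for which the answer is yes. *)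

(* Defs.v *)
From mathcomp Require Import all_boot.
Set Implicit Arguments. Unset Strict Implicit. Unset Printing Implicit Defensive.

(* A bipartite graph is given by vertex sets VX : {set TX}, VY : {set TY}
   (TX, TY finite types, hence disjoint) and an adjacency relation
   E : TX -> TY -> bool; the edges are the pairs (x,y) with x \in VX,
   y \in VY and E x y. *)

Definition strict_linear_on (T : finType) (S : {set T}) (r : rel T) : Prop :=
  [/\ (forall x, x \in S -> ~~ r x x),
      (forall x y z, x \in S -> y \in S -> z \in S -> r x y -> r y z -> r x z)
    & (forall x y, x \in S -> y \in S -> x != y -> r x y || r y x)].

Definition is_edge (TX TY : finType) (VX : {set TX}) (VY : {set TY})
  (E : TX -> TY -> bool) (e : TX * TY) : bool :=
  [&& e.1 \in VX, e.2 \in VY & E e.1 e.2].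

Definition cross_ord (TX TY : finType) (ltX : rel TX) (ltY : rel TY)
  (e f : TX * TY) : bool :=
  [&& e.1 != f.1, e.2 != f.2, ltX e.1 f.1 & ltY f.2 e.2].

Definition crosses (TX TY : finType) (ltX : rel TX) (ltY : rel TY)
  (e f : TX * TY) : bool :=
  cross_ord ltX ltY e f || cross_ord ltX ltY f e.

Definition k_planar (TX TY : finType) (VX : {set TX}) (VY : {set TY})
  (E : TX -> TY -> bool) (ltX : rel TX) (ltY : rel TY) (k : nat) : Prop :=
  forall e, is_edge VX VY E e ->
    #|[set f | is_edge VX VY E f && crosses ltX ltY e f]| <= k.

Definition yes_instance (TX TY : finType) (VX : {set TX}) (VY : {set TY})
  (E : TX -> TY -> bool) (ltX : rel TX) (k : nat) : Prop :=
  exists ltY : rel TY, strict_linear_on VY ltY /\ k_planar VX VY E ltX ltY k.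

Definition degX (TX TY : finType) (VY : {set TY}) (E : TX -> TY -> bool) (v : TX) : nat :=
  #|[set y in VY | E v y]|.

(* Main.v *)
Require Import Defs.
From mathcomp Require Import all_boot.
From mathcomp Require Import zify.
Set Implicit Arguments. Unset Strict Implicit.

Lemma min_exists (T:finType) (A : {set T}) (r: rel T) :
  strict_linear_on A r -> forall S : {set T}, S \subset A -> S != set0 ->
  exists2 m, m \in S & forall w, w \in S -> ~~ r w m.
Proof.
case=> irr tr tot S sSA /set0Pn [u0 u0S].
case: (arg_minnP (fun u => #|[set w in S | r w u]|) u0S) => m mS minm.
exists m => // w wS; apply/negP => rwm.
have := minm w wS; apply/negP; rewrite -ltnNge; apply: proper_card.
apply/properP; split.
  apply/subsetP => z; rewrite !inE => /andP[zS rzw].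
  by rewrite zS (tr z w m (subsetP sSA _ zS) (subsetP sSA _ wS) (subsetP sSA _ mS)).
exists w; first by rewrite inE wS rwm.
by rewrite inE (negbTE (irr _ (subsetP sSA _ wS))) andbF.
Qed.

Lemma rank_exists (T:finType) (A : {set T}) (r: rel T) :
  strict_linear_on A r -> forall n (S : {set T}), S \subset A -> n < #|S| ->
  exists2 t, t \in S & #|[set w in S | r w t]| = n.
Proof.
move=> hr; have [irr tr tot] := hr.
elim=> [|n IH] S sSA ltn.
- have S0 : S != set0 by rewrite -card_gt0.
  have [m mS minm] := min_exists hr sSA S0.
  exists m => //; apply/eqP; rewrite cards_eq0; apply/eqP/setP => w.
  rewrite !inE; case wS: (w \in S) => //=; exact/negbTE/minm.
- have S0 : S != set0 by rewrite -card_gt0; lia.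
  have [m mS minm] := min_exists hr sSA S0.
  have sSA' : S :\ m \subset A by apply: subset_trans sSA; apply: subsetDl.
  have : n < #|S :\ m| by move: ltn; rewrite (cardsD1 m) mS.
  case/(IH _ sSA') => t; rewrite in_setD1 => /andP[tm tS] ct.
  exists t => //.
  have -> : [set w in S | r w t] = m |: [set w in S :\ m | r w t].
    apply/setP => w; rewrite !inE; case: (eqVneq w m) => [->|] //=.
    rewrite mS /=; have := tot t m (subsetP sSA _ tS) (subsetP sSA _ mS) tm.
    by rewrite (negbTE (minm _ tS)).
  by rewrite cardsU1 ct !inE eqxx.
Qed.
Theorem lemma3p2 (TX TY : finType) (VX : {set TX}) (VY : {set TY})
  (E : TX -> TY -> bool) (ltX : rel TX) (k : nat) (v : TX) (y : TY) :
  strict_linear_on VX ltX ->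
  v \in VX -> 2 * k + 2 < degX VY E v ->
  y \in VY -> E v y -> [set x in VX | E x y] = [set v] ->
  (yes_instance VX VY E ltX k <-> yes_instance VX (VY :\ y) E ltX k).
Proof.
move=> hX vX hdeg yY Evy leaf; split.
- case=> ltY [[irr tr tot] kp]; exists ltY; split.
    split=> [x|x y' z|x y'].
    + by rewrite in_setD1 => /andP[_ /irr].
    + rewrite !in_setD1 => /andP[_ ?] /andP[_ ?] /andP[_ ?]; exact: tr.
    + rewrite !in_setD1 => /andP[_ ?] /andP[_ ?]; exact: tot.
  have sub : forall f, is_edge VX (VY :\ y) E f -> is_edge VX VY E f.
    by move=> f; rewrite /is_edge => /and3P[-> /setD1P[_ ->] ->].
  move=> e /sub /kp; apply: leq_trans; apply: subset_leq_card.
  by apply/subsetP => f; rewrite !inE => /andP[/sub -> ->].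
- case=> ltY [[irr tr tot] kp].
  set S := [set u in VY | E v u] :\ y.
  have cS : 2 * k + 2 <= #|S|.
    move: hdeg; rewrite /degX (cardsD1 y) !inE yY Evy /= -/S; lia.
  have sSA : S \subset VY :\ y.
    by apply/subsetP => u; rewrite !inE => /and3P[-> -> _].
  have memS : forall u, u \in S -> E v u by move=> u; rewrite !inE => /and3P[].
  clearbody S.
  have kS : k < #|S| by lia.
  have [t tS ct] := rank_exists (And3 irr tr tot) sSA kS.
  have tY : t \in VY :\ y by apply: (subsetP sSA).
  have inD : forall a, a \in VY -> a != y -> a \in VY :\ y.
    by move=> a aY ay; rewrite in_setD1 ay aY.
  pose ltY' : rel TY := fun a b => if a == y then (b != y) && ltY t b
     else if b == y then (a == t) || ltY a t else ltY a b.
  exists ltY'; split.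
  { split=> [a aY|a b c aY bY cY|a b aY bY ab]; rewrite /ltY'.
    - case: ifP => [/eqP->|/negbT ay]; [by rewrite eqxx | rewrite (negbTE ay); exact: irr (inD _ aY ay)].
    - case: (eqVneq a y) => [_|ay]; case: (eqVneq b y) => [_|by']; case: (eqVneq c y) => [_|cy] //=.
      + move=> h1 /orP[/eqP e|h2]; first by subst; rewrite (negbTE (irr _ tY)) in h1.
        by have := irr _ tY; rewrite (tr _ _ _ tY (inD _ bY by') tY h1 h2).
      + move=> h1 h2; exact: tr _ _ _ tY (inD _ bY by') (inD _ cY cy) h1 h2.
      + move=> /orP[/eqP->//|h1] h2; exact: tr _ _ _ (inD _ aY ay) tY (inD _ cY cy) h1 h2.
      + move=> h1 /orP[/eqP e|h2]; apply/orP; right; first by rewrite -e.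
        exact: tr _ _ _ (inD _ aY ay) (inD _ bY by') tY h1 h2.
      + move=> h1 h2; exact: tr _ _ _ (inD _ aY ay) (inD _ bY by') (inD _ cY cy) h1 h2.
    - case: (eqVneq a y) => [ea|ay]; case: (eqVneq b y) => [eb|by'] /=.
      + by move: ab; rewrite ea eb eqxx.
      + case: (eqVneq b t) => [_|bt]; rewrite ?orbT //.
        have := tot t b tY (inD _ bY by'); rewrite eq_sym bt => /(_ isT).
        by case/orP=> ->; rewrite ?orbT.
      + case: (eqVneq a t) => [_|ta]; rewrite ?orbT //.
        have := tot t a tY (inD _ aY ay); rewrite eq_sym ta => /(_ isT).
        by case/orP=> ->; rewrite ?orbT.
      + exact: tot (inD _ aY ay) (inD _ bY by') ab. }
  have ins : forall e, is_edge VX VY E e -> e = (v,y) \/ is_edge VX (VY:\y) E e.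
    case=> x w; rewrite /is_edge /= => /and3P[xX wY Exw].
    case: (eqVneq w y) => [ewy|wy]; [left | right].
      have : x \in [set x in VX | E x y] by rewrite inE xX -ewy.
      by rewrite leaf inE ewy => /eqP->.
    by rewrite xX in_setD1 wy wY Exw.
  have e2 : forall g, is_edge VX (VY:\y) E g -> g.2 != y.
    by move=> g /and3P[_ /setD1P[]].
  have agree : forall a b, a != y -> b != y -> ltY' a b = ltY a b.
    by move=> a b ay by'; rewrite /ltY' (negbTE ay) (negbTE by').
  have crossB : forall g f, g.2 != y -> f.2 != y ->
      crosses ltX ltY' g f = crosses ltX ltY g f.
    by move=> [x w] [x' w'] /= wy w'y; rewrite /crosses /cross_ord /= !agree.
  pose Lo := [set u in S | (u == t) || ltY u t].
  pose Hi := [set u in S | ltY t u].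
  have cLo : #|Lo| = k.+1.
    have -> : Lo = t |: [set w in S | ltY w t].
      apply/setP => u; rewrite !inE; case: (eqVneq u t) => [->|] //=.
      by rewrite tS.
    by rewrite cardsU1 ct inE (negbTE (irr _ tY)) andbF.
  have cHi : k.+1 <= #|Hi|.
    have : S \subset Lo :|: Hi.
      apply/subsetP => u uS; rewrite !inE uS /=.
      case: (eqVneq u t) => [//|ut] /=.
      exact: tot _ _ (subsetP sSA _ uS) tY ut.
    move/subset_leq_card; rewrite cardsU cLo; lia.
  have inj : injective (pair v : TY -> TX * TY) by move=> a b [].
  have crossA : forall g, is_edge VX (VY:\y) E g ->
      ~~ cross_ord ltX ltY' g (v,y) && ~~ cross_ord ltX ltY' (v,y) g.
    move=> [x w] ge; have wy := e2 _ ge.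
    have wD : w \in VY :\ y by case/and3P: ge.
    rewrite /cross_ord /= /ltY' eqxx (negbTE wy) /=.
    apply/andP; split; [apply/negP => /and3P[xv ltxv H] | apply/negP => /and4P[xv _ ltxv H]];
      have := kp _ ge; apply/negP; rewrite -ltnNge.
    + apply: (@leq_trans #|[set (v,u) | u in Lo]|); first by rewrite card_imset ?cLo.
      apply: subset_leq_card; apply/subsetP => f /imsetP[u uLo ->].
      rewrite /Lo inE in uLo; case/andP: uLo => uS ut.
      have uD := subsetP sSA _ uS.
      have ltuw : ltY u w.
        case/orP: ut => [/eqP->//|ut]; exact: tr _ _ _ uD tY wD ut H.
      have wu : w != u.
        by apply/eqP => ewu; move: ltuw; rewrite ewu (negbTE (irr _ uD)).
      by rewrite inE /is_edge /crosses /cross_ord /= vX uD (memS _ uS) xv wu ltxv ltuw.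
    + apply: (@leq_trans #|[set (v,u) | u in Hi]|); first by rewrite card_imset.
      apply: subset_leq_card; apply/subsetP => f /imsetP[u uHi ->].
      rewrite /Hi inE in uHi; case/andP: uHi => uS ut.
      have uD := subsetP sSA _ uS.
      have ltwu : ltY w u.
        case/orP: H => [/eqP->//|H]; exact: tr _ _ _ wD tY uD H ut.
      have uw : u != w.
        by apply/eqP => ewu; move: ltwu; rewrite ewu (negbTE (irr _ wD)).
      by rewrite inE /is_edge /crosses /cross_ord /= vX uD (memS _ uS) xv uw ltxv ltwu orbT.
  move=> e /ins [-> | ge].
  - suff -> : [set f | is_edge VX VY E f && crosses ltX ltY' (v, y) f] = set0 by rewrite cards0.
    apply/setP => f; rewrite !inE; apply/negbTE/negP => /andP[/ins [-> | gf] cr].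
      by move: cr; rewrite /crosses /cross_ord eqxx.
    have /andP[/negP n1 /negP n2] := crossA _ gf.
    by case/orP: cr.
  - have := kp _ ge; apply: leq_trans; apply: subset_leq_card.
    apply/subsetP => f; rewrite !inE => /andP[/ins [ef | gf] cr].
      have /andP[/negP n1 /negP n2] := crossA _ ge.
      by move: cr; rewrite ef /crosses; case/orP.
    by rewrite gf /= -crossB // ?e2.
Qed.
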